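(* The concrete category $(\text{VBIO-SET},U)$ over $\mathrm{SET}\times\mathcal D$, where $U$ is the forgetful functor $(X,L,i_{XL})\mapsto (X,L)$, $(f,\phi)\mapsto(f,\phi)$, is a topological category: every $U$-structured source $\big((X,L),((f_\lambda,\phi_\lambda):(X,L)\to U(Y_\lambda,M_\lambda,i_{Y_\lambda M_\lambda}))_{\lambda\in\Lambda}\big)$ has a unique $U$-initial lift.
   Context: A complete quasi-monoidal lattice (cqm-lattice) is a triple $(L,\le,\otimes)$ where $(L,\le)$ is a complete lattice with top $\top$ and bottom $\bot$, and $\otimes:L\times L\to L$ is isotone in both arguments with $\top\otimes\top=\top$. $\mathrm{CQML}$ is the category of cqm-lattices whose morphisms are maps preserving $\otimes$, $\top$ and arbitrary joins. Fix a subcategory $\mathcal D$ of $\mathrm{CQML}$. The category $\mathrm{SET}\times\mathcal D$ has objects pairs $(X,L)$ with $X$ a set and $L$ an object of $\mathcal D$; a morphism $(f,\phi):(X,L)\to(Y,M)$ consists of a function $f:X\to Y$ and a $\mathcal D$-morphism $\phi^{op}:M\to L$; composition is $(g,\psi)\circ(f,\phi)=(g\circ f,\psi\circ\phi)$ with lattice part $\phi^{op}\circ\psi^{op}$, identities $(\mathrm{id}_X,\mathrm{id}_L)$. $L^X$ is the set of maps $X\to L$ ordered pointwise; $1_X$ is the constant map with value $\top$. The backward operator is $(f,\phi)^{\leftarrow}:M^Y\to L^X$, $(f,\phi)^{\leftarrow}(b)=\phi^{op}\circ b\circ f$. An interior map on $(X,L)$ is a map $i:L^X\to L^X$ with (I1)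 $i(u)\le u$; (I2) $u\le v\Rightarrow i(u)\le i(v)$; (I3) $i(1_X)=1_X$. A morphism $(f,\phi):(X,L)\to(Y,M)$ is fuzzy $I$-continuous from $(X,L,i_{XL})$ to $(Y,M,i_{YM})$ if $(f,\phi)^{\leftarrow}(i_{YM}(v))\le i_{XL}((f,\phi)^{\leftarrow}(v))$ for all $v\in M^Y$. VBIO-SET is the category whose objects are triples $(X,L,i_{XL})$ with $(X,L)\in\mathrm{SET}\times\mathcal D$ and $i_{XL}$ an interior map on $(X,L)$, whose morphisms are the fuzzy $I$-continuous morphisms, with identities and composition as in $\mathrm{SET}\times\mathcal D$. A $U$-initial lift of such a structured source is an object $(X,L,i)$ of VBIO-SET such that all $(f_\lambda,\phi_\lambda):(X,L,i)\to(Y_\lambda,M_\lambda,i_{Y_\lambda M_\lambda})$ are VBIO-SET morphisms and, for every object $(Z,N,i_{ZN})$ and every $\mathrm{SET}\times\mathcal D$-morphism $(g,\psi):(Z,N)\to(X,L)$, $(g,\psi)$ is a VBIO-SET morphism $(Z,N,i_{ZN})\to(X,L,i)$ if and only if each $(f_\lambda,\phi_\lambda)\circ(g,\psi)$ is a VBIO-SET morphism. *)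

(* Defs.v *)
From Stdlib Require Import Classical FunctionalExtensionality.



Record cqmLattice := CQM {
  car :> Type;
  le : car -> car -> Prop;
  le_refl : forall x, le x x;
  le_trans : forall x y z, le x y -> le y z -> le x z;
  le_antisym : forall x y, le x y -> le y x -> x = y;
  sup : (car -> Prop) -> car;
  sup_ub : forall (S : car -> Prop) x, S x -> le x (sup S);
  sup_least : forall (S : car -> Prop) y, (forall x, S x -> le x y) -> le (sup S) y;
  top : car;
  top_greatest : forall x, le x top;
  tens : car -> car -> car;
  tens_mono : forall a b c d, le a b -> le c d -> le (tens a c) (tens b d);
  tens_top : tens top top = top
}.

Definition cqml_hom (L M : cqmLattice) (h : L -> M) : Prop :=
  (forall a b, h (tens L a b) = tens M (h a) (h b)) /\
  h (top L) = top M /\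
  (forall S : L -> Prop, h (sup L S) = sup M (fun y => exists x, S x /\ y = h x)).

Record subcat := SubCat {
  DObj : cqmLattice -> Prop;
  DHom : forall L M : cqmLattice, (L -> M) -> Prop;
  DHom_cqml : forall (L M : cqmLattice) (h : L -> M), DHom L M h -> @cqml_hom L M h;
  DHom_dom : forall (L M : cqmLattice) (h : L -> M), DHom L M h -> DObj L /\ DObj M;
  DHom_id : forall L : cqmLattice, DObj L -> DHom L L (fun x => x);
  DHom_comp : forall (L M N : cqmLattice) (h : L -> M) (k : M -> N),
      DHom L M h -> DHom M N k -> DHom L N (fun x => k (h x))
}.
Arguments DHom : clear implicits.

Definition lef {X : Type} {L : cqmLattice} (u v : X -> L) : Prop :=
  forall x, le L (u x) (v x).

Arguments lef : clear implicits.
Arguments lef {X L}.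
Definition one (X : Type) (L : cqmLattice) : X -> L := fun _ => top L.

Definition interior {X : Type} {L : cqmLattice} (i : (X -> L) -> (X -> L)) : Prop :=
  (forall u, lef (i u) u) /\
  (forall u v, lef u v -> lef (i u) (i v)) /\
  i (one X L) = one X L.

(** Backward operator of (f,phi) : (X,L) -> (Y,M), where phi = phi^op : M -> L. *)
Definition bw {X Y : Type} {L M : cqmLattice} (f : X -> Y) (phi : M -> L)
  (b : Y -> M) : X -> L := fun x => phi (b (f x)).

Definition Icont {X Y : Type} {L M : cqmLattice}
  (iX : (X -> L) -> (X -> L)) (iY : (Y -> M) -> (Y -> M))
  (f : X -> Y) (phi : M -> L) : Prop :=
  forall v : Y -> M, lef (bw f phi (iY v)) (iX (bw f phi v)).

Definition vbio_hom (D : subcat) {X Y : Type} {L M : cqmLattice}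
  (iX : (X -> L) -> (X -> L)) (iY : (Y -> M) -> (Y -> M))
  (f : X -> Y) (phi : M -> L) : Prop :=
  DHom D M L phi /\ Icont iX iY f phi.

Definition initial_lift (D : subcat) {X : Type} {L : cqmLattice}
  {Lam : Type} (Y : Lam -> Type) (M : Lam -> cqmLattice)
  (iY : forall l, (Y l -> M l) -> (Y l -> M l))
  (f : forall l, X -> Y l) (phi : forall l, M l -> L)
  (i : (X -> L) -> (X -> L)) : Prop :=
  interior i /\
  (forall l, vbio_hom D i (iY l) (f l) (phi l)) /\
  (forall (Z : Type) (N : cqmLattice) (iZ : (Z -> N) -> (Z -> N)),
     DObj D N -> interior iZ ->
     forall (g : Z -> X) (psi : L -> N), DHom D L N psi ->
       (vbio_hom D iZ i g psi <->
        forall l, vbio_hom D iZ (iY l) (fun z => f l (g z)) (fun m => psi (phi l m)))).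

(* Main.v *)
Require Import Defs.
From Stdlib Require Import Classical FunctionalExtensionality.

Lemma hom_mono (L M : cqmLattice) (h : L -> M) : @cqml_hom L M h ->
  forall a b, le L a b -> le M (h a) (h b).
Proof.
  intros [_ [_ Hs]] a b Hab.
  assert (E : sup L (fun x => x = a \/ x = b) = b).
  { apply le_antisym.
    - apply sup_least. intros x [->| ->]; [exact Hab| apply le_refl].
    - apply sup_ub. now right. }
  rewrite <- E, Hs. apply sup_ub. exists a. split; auto.
Qed.

Lemma lef_one_eq X (L : cqmLattice) (u : X -> L) : lef (one X L) u -> u = one X L.
Proof.
  intros H; apply functional_extensionality; intro x.
  apply le_antisym; [apply top_greatest| apply H].
Qed.

Theorem mainTheorem5 :
  forall (D : subcat) (X : Type) (L : cqmLattice), DObj D L ->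
  forall (Lam : Type) (Y : Lam -> Type) (M : Lam -> cqmLattice),
  (forall l, DObj D (M l)) ->
  forall (iY : forall l, (Y l -> M l) -> (Y l -> M l)),
  (forall l, interior (iY l)) ->
  forall (f : forall l, X -> Y l) (phi : forall l, M l -> L),
  (forall l, DHom D (M l) L (phi l)) ->
  exists! i : (X -> L) -> (X -> L), initial_lift D Y M iY f phi i.
Proof.
  intros D X L DL Lam Y M DM iY HiY f phi Hphi.
  assert (phimono : forall l a b, le _ a b -> le L (phi l a) (phi l b)).
  { intros l. apply (@hom_mono _ _ (phi l)). apply (DHom_cqml D _ _ _ (Hphi l)). }
  set (i := fun (u : X -> L) (x : X) => sup L (fun a =>
         (u = one X L /\ a = top L) \/
         exists l v, lef (bw (f l) (phi l) v) u /\ a = phi l (iY l v (f l x)))).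
  assert (Hint : interior i).
  { split; [|split].
    - intros u x. unfold i. apply sup_least. intros a [[-> ->]|[l [v [Hv ->]]]].
      + apply le_refl.
      + eapply le_trans; [apply phimono, (proj1 (HiY l))| apply Hv].
    - intros u w Huw x. unfold i. apply sup_least. intros a [[-> ->]|[l [v [Hv ->]]]].
      + apply sup_ub. left. split; auto. apply lef_one_eq. exact Huw.
      + apply sup_ub. right. exists l, v. split; auto.
        intro y. eapply le_trans; [apply Hv| apply Huw].
    - apply functional_extensionality; intro x. apply le_antisym.
      + apply top_greatest.
      + unfold i. apply sup_ub. left. auto. }
  assert (Hcont : forall l, Icont i (iY l) (f l) (phi l)).
  { intros l v x. unfold bw at 1, i. apply sup_ub. right. exists l, v.
    split; auto. intro y. apply le_refl. }
  assert (Hinit : initial_lift D Y M iY f phi i).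
  { split; [exact Hint|split].
    + intro l. split; auto.
    + intros Z N iZ DN HiZ g psi Hpsi.
      assert (psimono := @hom_mono _ _ _ (DHom_cqml D _ _ _ Hpsi)).
      split.
      * intros [_ Hg] l. split.
        { exact (DHom_comp D _ _ _ (phi l) psi (Hphi l) Hpsi). }
        intros v z. unfold bw.
        eapply le_trans; [apply psimono, (Hcont l v (g z))|].
        apply (Hg (bw (f l) (phi l) v) z).
      * intros H. split; auto. intros u z. unfold bw at 1. unfold i.
        destruct (DHom_cqml D _ _ _ Hpsi) as [_ [Htop Hsup]].
        rewrite Hsup. apply sup_least. intros b [a [Ha ->]].
        destruct Ha as [[-> ->]|[l [v [Hv ->]]]].
        { rewrite Htop.
          assert (E : bw g psi (one X L) = one Z N).
          { apply functional_extensionality; intro; unfold bw, one. exact Htop. }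
          rewrite E, (proj2 (proj2 HiZ)). apply le_refl. }
        { destruct (H l) as [_ Hl].
          eapply le_trans; [apply (Hl v z)|].
          apply (proj1 (proj2 HiZ)). intro z'. unfold bw. apply psimono. apply Hv. } }
  exists i. split; [exact Hinit|].
  intros j [Hj [Hjl Hjuniv]].
  destruct Hinit as [_ [Hil Hiuniv]].
  apply functional_extensionality; intro u. apply functional_extensionality; intro x.
  apply le_antisym.
  - destruct (proj2 (Hiuniv X L j DL Hj (fun x => x) (fun x => x) (DHom_id D L DL))) as [_ Hc].
    + intro l. exact (Hjl l).
    + exact (Hc u x).
  - destruct (proj2 (Hjuniv X L i DL Hint (fun x => x) (fun x => x) (DHom_id D L DL))) as [_ Hc].
    + intro l. exact (Hil l).
    + exact (Hc u x).
Qed.
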